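(* Let $\Bbbk$ be an algebraically closed field of characteristic $0$ and let $G \simeq C_m \times C_{lm}$ (with $m, l$ positive integers) be a finite abelian subgroup of $\mathrm{SL}_3(\Bbbk)$, where the embedding is given by the representation $\rho = \chi_1 \oplus \chi_2 \oplus \chi_3$ with $\chi_1,\chi_2,\chi_3$ one-dimensional characters of $G$. Suppose that no $\chi_i$ is the trivial character and that $|G| > 4$. Then there exists a direct product decomposition $G = H \times K$ with $H$ cyclic such that none of the restrictions $\chi_i|_H$ ($i=1,2,3$) is trivial.
   Context: $C_r$ denotes the cyclic group of order $r$. *)

(* Defs.v *)
From HB Require Import structures.
From mathcomp Require Import all_boot all_order all_algebra all_fingroup all_solvable.
Set Implicit Arguments. Unset Strict Implicit. Unset Printing Implicit Defensive.
Import GRing.Theory.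
Local Open Scope ring_scope.

Definition lin_char (gT : finGroupType) (k : fieldType) (G : {group gT})
    (chi : gT -> k) : Prop :=
  {in G &, forall x y, chi (x * y)%g = chi x * chi y} /\
  {in G, forall x, chi x != 0}.

Definition trivial_on (gT : finGroupType) (k : fieldType) (A : {set gT})
    (chi : gT -> k) : Prop :=
  {in A, forall x, chi x = 1}.

(* Main.v *)
Require Import Defs.
From HB Require Import structures.
From mathcomp Require Import all_boot all_order all_algebra all_fingroup all_solvable.
Import GRing.Theory.
Local Open Scope ring_scope.

Lemma e3 : forall l : 'I_3, l = 0 \/ l = 1 \/ l = 2.
Proof. case=> [[|[|[|l]]] Hl]; [left|right;left|right;right|by []]; exact: val_inj. Qed.

Lemma pig3 (i0 i1 i2 i : 'I_3) :
  i0 != i1 -> i0 != i2 -> i1 != i2 -> i = i0 \/ i = i1 \/ i = i2.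
Proof.
have [->|[->|->]] := e3 i0; have [->|[->|->]] := e3 i1; have [->|[->|->]] := e3 i2;
have [->|[->|->]] := e3 i => //; by [left|right;left|right;right].
Qed.

Theorem lemma3p6 (k : closedFieldType) (gT : finGroupType) (G : {group gT})
    (chi : 'I_3 -> gT -> k) :
  [pchar k] =i pred0 ->
  (* G is isomorphic to C_m x C_{lm}, m, l >= 1 (internal decomposition) *)
  (exists A B : {group gT},
      [/\ cyclic A, cyclic B, (A \x B)%g = G & (#|A| %| #|B|)%N]) ->
  (* each chi i is a one-dimensional character of G *)
  (forall i, lin_char G (chi i)) ->
  (* rho = chi 0 + chi 1 + chi 2 is faithful (G embeds in GL_3) *)
  {in G, forall x, (forall i, chi i x = 1) -> x = 1%g} ->
  (* rho lands in SL_3 *)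
  {in G, forall x, chi 0 x * chi 1 x * chi 2 x = 1} ->
  (* no chi i is trivial *)
  (forall i, ~ trivial_on G (chi i)) ->
  (4 < #|G|)%N ->
  exists H K : {group gT},
    [/\ (H \x K)%g = G, cyclic H & forall i, ~ trivial_on H (chi i)].
Proof.
move=> _ [A [B [cA cB dAB mn]]] lin faith sl ntriv G4.
have [_ AB_G cAB tiAB] := @dprodP gT A B G dAB.
have abG : abelian G by rewrite -AB_G abelianM !cyclic_abelian.
have [sAG sBG] := mulG_sub AB_G.
case/cyclicP: cA => a defA; case/cyclicP: cB => b defB.
have aG : a \in G by rewrite (subsetP sAG) // defA cycle_id.
have bG : b \in G by rewrite (subsetP sBG) // defB cycle_id.
have comm : forall x y, x \in G -> y \in G -> commute x y.
  by move=> x y Gx Gy; apply: (centsP abG).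
set n := #[b]%g; have Bn : #|B| = n by rewrite defB.
have expn : forall x, x \in G -> (x ^+ n = 1)%g.
  move=> x; rewrite -AB_G => /mulsgP[y z Ay Bz ->].
  rewrite expgMn; last by apply: comm; [apply: (subsetP sAG) | apply: (subsetP sBG)].
  have /eqP -> : (y ^+ n == 1)%g.
    by rewrite -order_dvdn (dvdn_trans (order_dvdG Ay)) // -Bn.
  have /eqP -> : (z ^+ n == 1)%g by rewrite -order_dvdn -Bn order_dvdG.
  by rewrite mulg1.
have ordG : forall x, x \in G -> (#[x]%g %| n)%N by move=> x Gx; rewrite order_dvdn expn.
have n_gt0 : (0 < n)%N by rewrite order_gt0.
have cardG : #|G| = (#[a]%g * n)%N by rewrite -(dprod_card dAB) defA Bn.
have chi1 : forall i, chi i 1%g = 1.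
  move=> i; have [hm hnz] := lin i.
  have e : chi i 1%g * 1 = chi i 1%g * chi i 1%g by rewrite -hm ?mulg1 ?mulr1.
  by apply/esym/(mulfI (hnz _ (group1 G))).
have two_triv : forall x i j, x \in G -> i != j -> chi i x = 1 -> chi j x = 1 -> x = 1%g.
  move=> x i j Gx ij ci cj; apply: (faith x Gx) => l; have P := sl x Gx.
  move: P ij ci cj; have [->|[->|->]] := e3 i; have [->|[->|->]] := e3 j;
  have [->|[->|->]] := e3 l => // P _ ci cj; rewrite ?ci ?cj //;
  by move: P; rewrite ?ci ?cj ?mul1r ?mulr1.
have kgs : forall i, group_set [set x in G | chi i x == 1].
  move=> i; apply/group_setP; split; first by rewrite inE group1 chi1 eqxx.
  move=> x y; rewrite !inE => /andP[Gx /eqP cx] /andP[Gy /eqP cy].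
  by rewrite groupM //= (lin i).1 // cx cy mulr1.
pose K i := Group (kgs i).
have inK : forall i x, (x \in K i) = (x \in G) && (chi i x == 1).
  by move=> i x; rewrite inE.
have cycK : forall i, cyclic (K i).
  move=> i; have [j ji] : exists j, j != i.
    by have [->|[->|->]] := e3 i; [exists 1|exists 0|exists 0].
  apply: (field_mul_group_cyclic (f := chi j)).
    move=> x y; rewrite !inK => /andP[Gx _] /andP[Gy _]; exact: (lin j).1.
  move=> x; rewrite inK => /andP[Gx /eqP ci]; split; last by move->; exact: chi1.
  by move=> cj; exact: (two_triv x j i Gx ji cj ci).
have KC : forall i y z, y \in K i -> #[y]%g = n -> z \in K i -> z \in <[y]>%g.
  move=> i y z yK oy zK; case/cyclicP: (cycK i) => g defK.
  have gG : g \in G by move: (cycle_id g); rewrite -defK inK => /andP[].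
  have sub : <[y]>%g \subset K i by rewrite cycle_subG.
  have : <[y]>%g == K i :> {set gT}.
    by rewrite eqEcard sub defK -!orderE oy dvdn_leq // ordG.
  by move/eqP->.
have TIb : forall x, x \in A -> x \in B -> x = 1%g.
  move=> x xA xB; have : x \in A :&: B by rewrite inE xA xB.
  by rewrite tiAB inE => /eqP.
have a_A : a \in A by rewrite defA cycle_id.
have b_B : b \in B by rewrite defB cycle_id.
have [a1|a2] := leqP #[a]%g 1.
  have A1 : A = 1%G :> {set gT} by apply: card_le1_trivg; rewrite defA -orderE.
  exists G, 1%G; split; first exact: dprodg1.
    by rewrite -AB_G A1 mul1g defB cycle_cyclic.
  exact: ntriv.
pose y s := (b * a ^+ s)%g.
have yG : forall s, y s \in G by move=> s; rewrite groupM ?groupX.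
have oy : forall s, #[y s]%g = n.
  move=> s; apply/eqP; rewrite eqn_dvd ordG ?yG //= order_dvdn.
  have e := expg_order (y s); rewrite /y expgMn in e; last by apply: comm; rewrite ?groupX.
  have bA : (b ^+ #[y s]%g \in A)%g.
    have -> : (b ^+ #[y s]%g = ((a ^+ s) ^+ #[y s]%g)^-1)%g.
      by rewrite -[LHS](mulgK ((a ^+ s) ^+ #[y s]%g)%g) e mul1g.
    by rewrite groupV !groupX.
  by apply/eqP/TIb => //; rewrite groupX.
have TIy : forall s, (<[y s]> :&: A = 1)%g.
  move=> s; apply/trivgP/subsetP => z; rewrite inE => /andP[/cycleP[t ->] zA].
  rewrite inE; move: zA; rewrite /y expgMn; last by apply: comm; rewrite ?groupX.
  move=> zA.
  have bA : (b ^+ t \in A)%g.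
    have -> : (b ^+ t = (b ^+ t * (a ^+ s) ^+ t) * ((a ^+ s) ^+ t)^-1)%g by rewrite mulgK.
    by rewrite groupM // groupV !groupX.
  have bt1 := TIb _ bA (groupX t b_B).
  have : (#[y s]%g %| t)%N by rewrite oy order_dvdn bt1.
  by rewrite order_dvdn /y expgMn ?bt1; last by apply: comm; rewrite ?groupX.
have dpy : forall s, (<[y s]> \x A)%g = G.
  move=> s; rewrite dprodE ?TIy //; last first.
    by apply: (sub_abelian_cent2 abG); rewrite ?cycle_subG ?yG.
  apply/eqP; rewrite eqEcard mulG_subG cycle_subG yG sAG /= TI_cardMg ?TIy //.
  by rewrite cardG -orderE oy defA -orderE mulnC.
have Hy : forall s, (forall i, chi i (y s) != 1) -> exists H K : {group gT},
    [/\ (H \x K)%g = G, cyclic H & forall i, ~ trivial_on H (chi i)].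
  move=> s gs; exists <[y s]>%G, A; split; [exact: dpy | exact: cycle_cyclic |].
  by move=> i triv; have := gs i; rewrite triv ?eqxx // cycle_id.
have Ha : (forall i, chi i a != 1) -> exists H K : {group gT},
    [/\ (H \x K)%g = G, cyclic H & forall i, ~ trivial_on H (chi i)].
  move=> ga; exists A, B; split => //; first by rewrite defA cycle_cyclic.
  by move=> i triv; have := ga i; rewrite triv ?eqxx.
have bad : forall x, x \in G -> ~~ [forall i, chi i x != 1] -> exists i, x \in K i.
  move=> x Gx; rewrite negb_forall => /existsP[i]; rewrite negbK => ci.
  by exists i; rewrite inK Gx.
have S : forall s t i, (s < t < #[a]%g)%N -> y s \in K i -> y t \in K i -> False.
  move=> s t i /andP[st ta] ysK ytK.
  have yt := KC i (y s) (y t) ysK (oy s) ytK.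
  have e : ((y s)^-1 * y t)%g = ((a ^+ s)^-1 * a ^+ t)%g by rewrite /y invMg -mulgA mulKg.
  have : ((y s)^-1 * y t)%g \in (<[y s]> :&: A)%g.
    by rewrite inE groupM ?groupV ?cycle_id //= e groupM ?groupV ?groupX.
  rewrite TIy inE e -eq_mulVg1 eq_expg_mod_order !modn_small //; last exact: ltn_trans ta.
  by move/eqP=> est; rewrite est ltnn in st.
have [g0|b0] := boolP [forall i, chi i (y 0%N) != 1].
  by apply: (Hy 0%N) => i; exact: (forallP g0 i).
have [g1|b1] := boolP [forall i, chi i (y 1%N) != 1].
  by apply: (Hy 1%N) => i; exact: (forallP g1 i).
have [i0 y0K] := bad _ (yG _) b0.
have [i1 y1K] := bad _ (yG _) b1.
have i01 : i0 != i1.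
  by apply/eqP => e01; apply: (S 0%N 1%N i0) => //; rewrite ?e01 //= a2.
have ti : (<[y 0%N]> :&: <[y 1%N]> = 1)%g.
  apply/trivgP/subsetP => z; rewrite inE => /andP[z0 z1]; rewrite inE; apply/eqP.
  have s0 : (<[y 0%N]> \subset K i0)%g by rewrite cycle_subG.
  have s1 : (<[y 1%N]> \subset K i1)%g by rewrite cycle_subG.
  have := subsetP s0 z z0; rewrite inK => /andP[Gz /eqP c0].
  have := subsetP s1 z z1; rewrite inK => /andP[_ /eqP c1].
  exact: (two_triv z i0 i1).
have nm : (n <= #[a]%g)%N.
  have : (n * n <= #[a]%g * n)%N.
    rewrite -cardG -{1}(oy 0%N) -(oy 1%N) !orderE -TI_cardMg //.
    by rewrite subset_leq_card // mulG_subG !cycle_subG !yG.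
  by rewrite leq_pmul2r.
have mn' : #[a]%g = n.
  apply/eqP; rewrite eqn_leq nm andbT dvdn_leq //.
  by move: mn; rewrite defA Bn -orderE.
have [a2'|a3] := leqP #[a]%g 2.
  have a2e : #[a]%g = 2 by apply/eqP; rewrite eqn_leq a2' a2.
  by move: G4; rewrite cardG -mn' a2e.
have [g2|b2] := boolP [forall i, chi i (y 2%N) != 1].
  by apply: (Hy 2%N) => i; exact: (forallP g2 i).
have [i2 y2K] := bad _ (yG _) b2.
have i02 : i0 != i2.
  by apply/eqP => e; apply: (S 0%N 2%N i0) => //; rewrite ?e //= a3.
have i12 : i1 != i2.
  by apply/eqP => e; apply: (S 1%N 2%N i1) => //; rewrite ?e //= a3.
have [ga|ba] := boolP [forall i, chi i a != 1].
  by apply: Ha => i; exact: (forallP ga i).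
have [i aK] := bad _ aG ba.
have final : forall s, y s \in K i -> False.
  move=> s ysK.
  have ya := KC i a (y s) aK mn' ysK.
  have bA : b \in A.
    rewrite defA (_ : b = y s * (a ^+ s)^-1)%g; last by rewrite /y mulgK.
    by rewrite groupM ?groupV ?groupX ?cycle_id.
  have eb1 := TIb b bA b_B.
  by move: a3; rewrite mn' /n eb1 order1.
have [e|[e|e]] := @pig3 i0 i1 i2 i i01 i02 i12; subst i.
- by case: (final _ y0K).
- by case: (final _ y1K).
- by case: (final _ y2K).
Qed.
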